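(* Let $R$ be a ring with identity and involution $*$, and let $a\in R$. The following conditions are equivalent: (1) $a$ is core invertible; (2) $R = aR \oplus (a^* )^{\circ}$ and $R = aR \oplus a^{\circ}$; (3) $R = aR + (a^* )^{\circ}$ and $R = aR \oplus a^{\circ}$; (4) $R = Ra^* \oplus {}^{\circ}a$ and $R = aR \oplus a^{\circ}$; (5) $R = Ra^* + {}^{\circ}a$ and $R = aR \oplus a^{\circ}$; (6) $R = aR \oplus (a^* )^{\circ}$ and $R = Ra \oplus {}^{\circ}a$; (7) $R = aR + (a^* )^{\circ}$ and $R = Ra \oplus {}^{\circ}a$; (8) $R = Ra^* \oplus {}^{\circ}a$ and $R = Ra \oplus {}^{\circ}a$; (9) $R = Ra^* + {}^{\circ}a$ and $R = Ra \oplus {}^{\circ}a$. In this case, $$a^{\oplus} = a y_1^2 a x_1 = a y_1^2 a x_2^* = y_2 a x_1 = y_2 a x_2^*,$$ where $x_1,x_2,y_1,y_2\in R$ are any elements with $1 = ax_1 + u_1 = x_2 a^* + u_2 = a y_1 + v_1 = y_2 a + v_2$ for some $u_1 \in (a^* )^{\circ}$, $v_1 \in a^{\circ}$ and $u_2, v_2 \in {}^{\circ}a$.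
   Context: An involution on $R$ satisfies $(a^* )^*=a$, $(ab)^*=b^*a^*$, $(a+b)^*=a^*+b^*$. An element $x\in R$ is a core inverse of $a$ if $axa=a$, $xR=aR$ and $Rx=Ra^*$; it is unique, denoted $a^{\oplus}$, and $a$ is then core invertible. For $c\in R$: $cR=\{cx: x\in R\}$, $Rc=\{xc:x\in R\}$, $c^{\circ}=\{x\in R: cx=0\}$ (right annihilator), ${}^{\circ}c=\{x\in R: xc=0\}$ (left annihilator). ''$R = A \oplus B$'' means $R=A+B$ with $A\cap B=\{0\}$. *)

(* Defs.v *)
From mathcomp Require Import all_boot all_algebra.
Set Implicit Arguments. Unset Strict Implicit. Unset Printing Implicit Defensive.
Import GRing.Theory.
Local Open Scope ring_scope.

(* Subsets of R are represented as predicates R -> Prop. *)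

Definition is_involution (R : pzRingType) (star : R -> R) : Prop :=
  [/\ forall a, star (star a) = a,
      forall a b, star (a * b) = star b * star a &
      forall a b, star (a + b) = star a + star b].

Definition rideal (R : pzRingType) (c : R) : R -> Prop := fun z => exists x, z = c * x.
Definition lideal (R : pzRingType) (c : R) : R -> Prop := fun z => exists x, z = x * c.
Definition rann (R : pzRingType) (c : R) : R -> Prop := fun x => c * x = 0.
Definition lann (R : pzRingType) (c : R) : R -> Prop := fun x => x * c = 0.

Definition set_eq (R : Type) (A B : R -> Prop) : Prop := forall z, A z <-> B z.

Definition sum_full (R : pzRingType) (A B : R -> Prop) : Prop :=
  forall z, exists x y, [/\ A x, B y & z = x + y].

Definition dsum_full (R : pzRingType) (A B : R -> Prop) : Prop :=
  sum_full A B /\ (forall z, A z -> B z -> z = 0).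

Definition core_inverse (R : pzRingType) (star : R -> R) (a x : R) : Prop :=
  [/\ a * x * a = a, set_eq (rideal x) (rideal a) & set_eq (lideal x) (lideal (star a))].

Definition core_invertible (R : pzRingType) (star : R -> R) (a : R) : Prop :=
  exists x, core_inverse star a x.

(* Main.v *)
Require Import Defs.
From mathcomp Require Import all_boot all_algebra.
Import GRing.Theory.
Local Open Scope ring_scope.
Set Implicit Arguments. Unset Strict Implicit.

Lemma starK (R : pzRingType) (star : R -> R) (Hs : is_involution star) x : star (star x) = x.
Proof. by case: Hs. Qed.
Lemma starM (R : pzRingType) (star : R -> R) (Hs : is_involution star) x y : star (x * y) = star y * star x.
Proof. by case: Hs. Qed.
Lemma starD (R : pzRingType) (star : R -> R) (Hs : is_involution star) x y : star (x + y) = star x + star y.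
Proof. by case: Hs. Qed.
Lemma star0 (R : pzRingType) (star : R -> R) (Hs : is_involution star) : star 0 = 0.
Proof.
have h := starD Hs 0 0; rewrite addr0 in h.
by apply: (addrI (star 0)); rewrite addr0 -h.
Qed.
Lemma star1 (R : pzRingType) (star : R -> R) (Hs : is_involution star) : star 1 = 1.
Proof.
have h := starM Hs 1 (star 1). by rewrite mul1r starK // mul1r in h.
Qed.
Definition condA (R : pzRingType) (star : R -> R) (a x : R) := star a * (a * x) = star a.
Definition grp (R : pzRingType) (a g : R) := [/\ a * g * a = a, g * a * g = g & a * g = g * a].

Lemma core_props (R : pzRingType) (star : R -> R) (Hs : is_involution star) a c :
  core_inverse star a c ->
  [/\ a*c*a = a, c*a*c = c, c*a*a = a, a*c*c = c & star (a*c) = a*c].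
Proof.
case=> H1 Hr Hl.
have [s Es] : rideal a c by apply: (proj1 (Hr c)); exists 1; rewrite mulr1.
have [t Et] : rideal c a by apply: (proj2 (Hr a)); exists 1; rewrite mulr1.
have [p Ep] : lideal (star a) c by apply: (proj1 (Hl c)); exists 1; rewrite mul1r.
have [q Eq] : lideal c (star a) by apply: (proj2 (Hl (star a))); exists 1; rewrite mul1r.
have Ea : star a = star a * star c * star a.
  by rewrite -{1}H1 !(starM Hs) mulrA.
have Ec : c = c * star c * star a.
  by rewrite {1}Ep {1}Ea !mulrA -Ep.
have Eac : star (a*c) = a*c.
  by rewrite Ec !mulrA !(starM Hs) !(starK Hs) !mulrA.
have Eaac : star a * (a * c) = star a.
  by rewrite -Eac -(starM Hs) H1.
have H2 : c*a*c = c by rewrite {1}Ep -!mulrA Eaac -Ep.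
split=> //.
- by rewrite {2}Et mulrA H2 -Et.
- by rewrite {2}Es mulrA H1 -Es.
Qed.

Lemma core_grp (R : pzRingType) (star : R -> R) (Hs : is_involution star) a c :
  core_inverse star a c -> grp a (c*c*a).
Proof.
move=> /(core_props Hs) [H1 H2 H3 H4 H5].
have E1 : a * (c*c*a) = c * a by rewrite !mulrA H4.
have E2 : (c*c*a) * a = c * a by rewrite -!mulrA (mulrA c a a) H3.
split.
- by rewrite E1 H3.
- by rewrite -mulrA E1 -!mulrA (mulrA a c a) H1 !mulrA.
- by rewrite E1 E2.
Qed.

Lemma core_condA (R : pzRingType) (star : R -> R) (Hs : is_involution star) a c :
  core_inverse star a c -> condA star a c.
Proof.
move=> /(core_props Hs) [H1 H2 H3 H4 H5].
by rewrite /condA -H5 -(starM Hs) H1.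
Qed.

Lemma condA_key (R : pzRingType) (star : R -> R) (Hs : is_involution star) a x :
  condA star a x -> star x * star a * a = a.
Proof.
move=> H. have := congr1 star H. by rewrite !(starM Hs) !(starK Hs) ?mulrA.
Qed.

Lemma condA_inter (R : pzRingType) (star : R -> R) (Hs : is_involution star) a x :
  condA star a x -> forall r, star a * (a * r) = 0 -> a * r = 0.
Proof.
move=> H r Hr. by rewrite -(condA_key Hs H) -!mulrA Hr mulr0.
Qed.

Lemma condA_dA (R : pzRingType) (star : R -> R) (Hs : is_involution star) a x :
  condA star a x -> dsum_full (rideal a) (rann (star a)).
Proof.
move=> H; split.
- move=> z; exists (a * (x * z)), (z - a * (x * z)); split.
  + by exists (x * z).
  + by rewrite /rann mulrBr (mulrA a x z) mulrA H subrr.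
  + by rewrite addrC subrK.
- by move=> z [r ->] Hr; apply: (condA_inter Hs H).
Qed.

Lemma condA_dB (R : pzRingType) (star : R -> R) (Hs : is_involution star) a x :
  condA star a x -> dsum_full (lideal (star a)) (lann a).
Proof.
move=> H; have K := condA_key Hs H; split.
- move=> z; exists (z * star x * star a), (z - z * star x * star a); split.
  + by exists (z * star x).
  + by rewrite /lann mulrBl -!mulrA (mulrA (star x)) K subrr.
  + by rewrite addrC subrK.
- move=> z [r ->] Hr; rewrite /lann in Hr.
  by rewrite -H !mulrA Hr mul0r.
Qed.

Lemma sumA_condA (R : pzRingType) (star : R -> R) (Hs : is_involution star) a :
  sum_full (rideal a) (rann (star a)) -> exists x, condA star a x.
Proof.
move=> /(_ 1) [x0 [y0 [[x ->] Hy E]]]; exists x.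
by rewrite /condA -{2}(mulr1 (star a)) E mulrDr Hy addr0.
Qed.

Lemma sumB_condA (R : pzRingType) (star : R -> R) (Hs : is_involution star) a :
  sum_full (lideal (star a)) (lann a) -> exists x, condA star a x.
Proof.
move=> /(_ 1) [x0 [y0 [[p ->] Hy E]]]; exists (star p).
have E' := congr1 star E. rewrite (star1 Hs) (starD Hs) (starM Hs) (starK Hs) in E'.
have Hy' : star a * star y0 = 0 by rewrite -(starM Hs) Hy star0.
by rewrite /condA -{2}(mulr1 (star a)) E' mulrDr Hy' addr0.
Qed.

Lemma grp_dG (R : pzRingType) (a g : R) : grp a g -> dsum_full (rideal a) (rann a).
Proof.
case=> H1 H2 H3.
have Eaag : a * (a * g) = a by rewrite H3 mulrA H1.
have Egaa : g * a * a = a by rewrite -H3 H1.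
split.
- move=> z; exists (a * (g * z)), (z - a * (g * z)); split.
  + by exists (g * z).
  + by rewrite /rann mulrBr (mulrA a g z) mulrA Eaag subrr.
  + by rewrite addrC subrK.
- move=> z [r ->] Hr; rewrite /rann in Hr.
  by rewrite -Egaa -!mulrA Hr mulr0.
Qed.

Lemma grp_dH (R : pzRingType) (a g : R) : grp a g -> dsum_full (lideal a) (lann a).
Proof.
case=> H1 H2 H3.
have Eaag : a * a * g = a by rewrite -mulrA H3 mulrA H1.
have Egaa : g * a * a = a by rewrite -H3 H1.
split.
- move=> z; exists (z * g * a), (z - z * g * a); split.
  + by exists (z * g).
  + by rewrite /lann mulrBl -!mulrA (mulrA g a a) Egaa subrr.
  + by rewrite addrC subrK.
- move=> z [r ->] Hr; rewrite /lann in Hr.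
  by rewrite -Eaag !mulrA Hr !mul0r.
Qed.

Lemma dG_grp (R : pzRingType) (a : R) : dsum_full (rideal a) (rann a) -> exists g, grp a g.
Proof.
case=> Hs Hi.
have [x0 [v [[y ->] Hv E]]] := Hs 1.
have Eaay : a * (a * y) = a by rewrite -{3}(mulr1 a) E mulrDr Hv addr0.
have Eaay' : a * a * y = a by rewrite -mulrA.
have Eaya : a * y * a = a.
  apply/eqP; rewrite -subr_eq0; apply/eqP.
  have -> : a * y * a - a = a * (y * a - 1) by rewrite mulrBr mulr1 mulrA.
  apply: Hi; first by exists (y * a - 1).
  by rewrite /rann !mulrBr mulr1 !mulrA Eaay' subrr.
have Eayya : a * y * y * a = a * y.
  apply/eqP; rewrite -subr_eq0; apply/eqP.
  have -> : a * y * y * a - a * y = a * (y * y * a - y) by rewrite mulrBr !mulrA.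
  apply: Hi; first by exists (y * y * a - y).
  by rewrite /rann !mulrBr !mulrA Eaay' Eaya subrr.
exists (a * y * y); split.
- by rewrite !mulrA Eaay' Eaya.
- by rewrite Eayya !mulrA Eaya.
- by rewrite !mulrA Eaay' Eayya.
Qed.

Lemma dH_grp (R : pzRingType) (a : R) : dsum_full (lideal a) (lann a) -> exists g, grp a g.
Proof.
case=> Hs Hi.
have [x0 [v [[y ->] Hv E]]] := Hs 1.
have Eyaa : y * a * a = a by rewrite -{3}(mul1r a) E mulrDl Hv addr0.
have Eyaa' : y * (a * a) = a by rewrite mulrA.
have Eaya : a * y * a = a.
  apply/eqP; rewrite -subr_eq0; apply/eqP.
  apply: Hi; first by exists (a * y - 1); rewrite mulrBl mul1r.
  by rewrite /lann mulrBl -!mulrA Eyaa' subrr.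
have Eayya : a * y * y * a = y * a.
  apply/eqP; rewrite -subr_eq0; apply/eqP.
  apply: Hi; first by exists (a * y * y - y); rewrite mulrBl.
  by rewrite /lann mulrBl -!mulrA Eyaa' !mulrA Eaya subrr.
have Eyyaa : y * y * a * a = y * a by rewrite -(mulrA (y*y)) -mulrA Eyaa'.
exists (y * y * a); split.
- by rewrite !mulrA Eayya Eyaa.
- rewrite !mulrA Eyyaa.
  by rewrite -(mulrA y a y) -(mulrA y (a*y) y) -(mulrA y (a*y*y) a) Eayya mulrA.
- by rewrite !mulrA Eayya Eyyaa.
Qed.

Lemma make_core (R : pzRingType) (star : R -> R) (Hs : is_involution star) a g x :
  grp a g -> condA star a x -> core_inverse star a (g * a * x).
Proof.
case=> H1 H2 H3 HA.
have K := condA_key Hs HA.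
have HA' : star a * (a * x) = star a := HA.
have Eax : a * x = star x * star a.
  by rewrite -{1}K -!mulrA HA'.
have Eaxa : a * x * a = a.
  apply/eqP; rewrite -subr_eq0; apply/eqP.
  have -> : a * x * a - a = a * (x * a - 1) by rewrite mulrBr mulr1 mulrA.
  apply: (condA_inter Hs HA).
  by rewrite !mulrBr mulr1 !mulrA -(mulrA (star a) a x) HA' subrr.
have Eg : g = a * g * g by rewrite H3 -{1}H2.
have Egaa : g * a * a = a by rewrite -H3 H1.
have Hagax : a * (g * (a * x)) = a * x by rewrite !mulrA H1.
split.
- by rewrite !mulrA H1 Eaxa.
- move=> z; split; move=> [s ->].
  + by exists (g * g * a * x * s); rewrite {1}Eg !mulrA.
  + by exists (a * a * s); rewrite !mulrA -(mulrA g a x) -(mulrA g (a*x) a) Eaxa Egaa.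
- move=> z; split; move=> [s ->].
  + by exists (s * g * star x); rewrite -!mulrA Eax.
  + by exists (s * star a * a); rewrite -!mulrA Hagax HA'.
Qed.

Lemma core_formula (R : pzRingType) (star : R -> R) (Hs : is_involution star) a c x g :
  core_inverse star a c -> condA star a x -> g * a * a = a -> c = g * a * x.
Proof.
move=> Hc HA Hg.
have HC := core_condA Hs Hc.
have HA' : star a * (a * x) = star a := HA.
have HC' : star a * (a * c) = star a := HC.
have Eax : a * x = a * c.
  apply/eqP; rewrite -subr_eq0; apply/eqP.
  rewrite -mulrBr; apply: (condA_inter Hs HC).
  by rewrite !mulrBr HA' HC' subrr.
case: Hc => _ Hr _.
have [s Es] : rideal a c by apply: (proj1 (Hr c)); exists 1; rewrite mulr1.
by rewrite -mulrA Eax {2}Es !mulrA Hg -Es.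
Qed.

Lemma gen_y (R : pzRingType) (a y : R) :
  (forall z, rideal a z -> rann a z -> z = 0) -> a * (a * y) = a ->
  a * y * a = a /\ a * y * y * a = a * y.
Proof.
move=> Hi Eaay.
have Eaay' : a * a * y = a by rewrite -mulrA.
have Eaya : a * y * a = a.
  apply/eqP; rewrite -subr_eq0; apply/eqP.
  have -> : a * y * a - a = a * (y * a - 1) by rewrite mulrBr mulr1 mulrA.
  apply: Hi; first by exists (y * a - 1).
  by rewrite /rann !mulrBr mulr1 !mulrA Eaay' subrr.
split=> //.
apply/eqP; rewrite -subr_eq0; apply/eqP.
have -> : a * y * y * a - a * y = a * (y * y * a - y) by rewrite mulrBr !mulrA.
apply: Hi; first by exists (y * y * a - y).
by rewrite /rann !mulrBr !mulrA Eaay' Eaya subrr.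
Qed.

Theorem proposition2p11 (R : pzRingType) (star : R -> R) (a : R) :
  is_involution star ->
  [<-> core_invertible star a;
       dsum_full (rideal a) (rann (star a)) /\ dsum_full (rideal a) (rann a);
       sum_full (rideal a) (rann (star a)) /\ dsum_full (rideal a) (rann a);
       dsum_full (lideal (star a)) (lann a) /\ dsum_full (rideal a) (rann a);
       sum_full (lideal (star a)) (lann a) /\ dsum_full (rideal a) (rann a);
       dsum_full (rideal a) (rann (star a)) /\ dsum_full (lideal a) (lann a);
       sum_full (rideal a) (rann (star a)) /\ dsum_full (lideal a) (lann a);
       dsum_full (lideal (star a)) (lann a) /\ dsum_full (lideal a) (lann a);
       sum_full (lideal (star a)) (lann a) /\ dsum_full (lideal a) (lann a)]
  /\
  (forall c : R, core_inverse star a c ->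
   forall x1 x2 y1 y2 u1 u2 v1 v2 : R,
     1 = a * x1 + u1 -> 1 = x2 * star a + u2 ->
     1 = a * y1 + v1 -> 1 = y2 * a + v2 ->
     rann (star a) u1 -> rann a v1 -> lann a u2 -> lann a v2 ->
     [/\ c = a * y1 ^+ 2 * a * x1,
         c = a * y1 ^+ 2 * a * star x2,
         c = y2 * a * x1 &
         c = y2 * a * star x2]).
Proof.
move=> Hs.
have FC : core_invertible star a -> [/\ dsum_full (rideal a) (rann (star a)),
    dsum_full (lideal (star a)) (lann a), dsum_full (rideal a) (rann a)
    & dsum_full (lideal a) (lann a)].
  move=> [c Hc]; have HA := core_condA Hs Hc; have HG := core_grp Hs Hc.
  split; [exact: (condA_dA Hs HA) | exact: (condA_dB Hs HA)
         | exact: (grp_dG HG) | exact: (grp_dH HG)].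
have TC : forall x g, condA star a x -> grp a g -> core_invertible star a.
  by move=> x g HA HG; exists (g * a * x); apply: make_core.
split.
{ tfae; first by move/FC=> [D1 D2 D3 D4]; split.
  all: case=> Hx Hy.
  all: first [ have [x HA] := sumA_condA Hs Hx | have [x HA] := sumA_condA Hs Hx.1
             | have [x HA] := sumB_condA Hs Hx | have [x HA] := sumB_condA Hs Hx.1 ].
  all: first [ have [g HG] := dG_grp Hy | have [g HG] := dH_grp Hy ].
  all: try exact: (TC x g HA HG).
  all: have /FC [D1 D2 D3 D4] := TC x g HA HG.
  all: split; first [exact D1 | exact D2 | exact D3 | exact D4 | exact D1.1 | exact D2.1]. }
move=> c Hc x1 x2 y1 y2 u1 u2 v1 v2 E1 E2 E3 E4 U1 V1 U2 V2.
have HA1 : condA star a x1.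
  by rewrite /condA -{2}(mulr1 (star a)) E1 mulrDr (U1 : star a * u1 = 0) addr0.
have HA2 : condA star a (star x2).
  have E2' := congr1 star E2.
  rewrite (star1 Hs) (starD Hs) (starM Hs) (starK Hs) in E2'.
  have U2' : star a * star u2 = 0 by rewrite -(starM Hs) (U2 : u2 * a = 0) (star0 Hs).
  by rewrite /condA -{2}(mulr1 (star a)) E2' mulrDr U2' addr0.
have [h HG] : exists h, grp a h by exists (c * c * a); exact: core_grp Hc.
have [Hi1 Hi2] := grp_dG HG.
have Eaay : a * (a * y1) = a.
  by rewrite -{3}(mulr1 a) E3 mulrDr (V1 : a * v1 = 0) addr0.
have [Eaya Eayya] := gen_y Hi2 Eaay.
have G1 : a * y1 ^+ 2 * a * a = a by rewrite expr2 !mulrA Eayya Eaya.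
have G2 : y2 * a * a = a by rewrite -{3}(mul1r a) E4 mulrDl (V2 : v2 * a = 0) addr0.
split; apply: (core_formula Hs Hc) => //.
Qed.
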